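(* Let $n\ge 1$ and let $p$ be a probability distribution on $\{0,1\}^n$ with $p(x)>0$ for all $x$. For nonempty subsets $I,J\subseteq\{1,\dots,n\}$, the Fisher information between the coordinates $\eta_I$ and $\eta_J$ at $p$ is $$g^{IJ}(\eta)=\sum_{K\subseteq I\cap J}(-1)^{|I-K|+|J-K|}\cdot\frac{1}{p_K},$$ where $|\cdot|$ denotes cardinality.
   Context: For $K\subseteq\{1,\dots,n\}$ (including $K=\emptyset$), $p_K$ denotes $p(x)$ at the point $x$ with $x_i=1$ for $i\in K$ and $x_i=0$ for $i\notin K$. For $I\neq\emptyset$, $X_I(x)=\prod_{i\in I}x_i$ and the $\eta$-coordinates are $\eta_I=E_p[X_I]$; $(\eta_I)_{I\neq\emptyset}$ is a coordinate system on the manifold of strictly positive distributions on $\{0,1\}^n$. For a coordinate system $\xi$, the Fisher information is $g_{ij}=E_p\big[\frac{\partial\log p(x;\xi)}{\partial\xi_i}\frac{\partial\log p(x;\xi)}{\partial\xi_j}\big]$. *)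

(* Defs.v *)
From HB Require Import structures.
From mathcomp Require Import all_boot all_order all_algebra.
From mathcomp Require Import all_classical all_reals all_analysis.
Set Implicit Arguments. Unset Strict Implicit. Unset Printing Implicit Defensive.
Import Order.TTheory GRing.Theory Num.Theory.
Local Open Scope ring_scope.

Section Defs.
Variable R : realType.
Variable n : nat.

(* points of {0,1}^n, coordinates indexed by 'I_n = {0,...,n-1} *)
Definition bpoint := {ffun 'I_n -> bool}.

Definition XI (I : {set 'I_n}) (x : bpoint) : R := \prod_(i in I) (x i)%:R.

Definition etac (p : bpoint -> R) (I : {set 'I_n}) : R := \sum_(x : bpoint) p x * XI I x.

Definition is_pos_distr (p : bpoint -> R) : Prop :=
  (forall x, 0 < p x) /\ \sum_(x : bpoint) p x = 1.

Definition pt_of (K : {set 'I_n}) : bpoint := [ffun i => i \in K].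

(* d/d eta_I of log p(x; eta) at eta = eta(p), where pe is the inverse of the
   eta-chart (eta |-> distribution) *)
Definition score (pe : ({set 'I_n} -> R) -> bpoint -> R) (p : bpoint -> R)
  (I : {set 'I_n}) (x : bpoint) : R :=
  derive1 (fun t : R => ln (pe (fun L => etac p L + (if L == I then t else 0)) x)) 0.

Definition fisher (pe : ({set 'I_n} -> R) -> bpoint -> R) (p : bpoint -> R)
  (I J : {set 'I_n}) : R :=
  \sum_(x : bpoint) p x * (score pe p I x * score pe p J x).

End Defs.

(* Main.v *)
Require Import Defs.
From HB Require Import structures.
From mathcomp Require Import all_boot all_order all_algebra.
From mathcomp Require Import all_classical all_reals all_analysis.
From mathcomp Require Import ring lra.
Import Order.TTheory GRing.Theory Num.Theory.
Import mathcomp.boot.fintype mathcomp.boot.finset.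
Import numFieldNormedType.Exports.
Local Open Scope ring_scope.
Section S.
Variable R : realType.
Variable n : nat.

Definition cc (I K : {set 'I_n}) : R :=
  if K \subset I then (-1) ^+ #|I :\: K| else 0.

Definition tog (a : 'I_n) (K : {set 'I_n}) :=
  if a \in K then K :\ a else a |: K.

Lemma togK a : involutive (tog a).
Proof.
move=> K; rewrite /tog; case aK: (a \in K).
  by rewrite setD11 setD1K.
by rewrite setU11 setU1K ?aK.
Qed.

Lemma cc_tog (I K : {set 'I_n}) a : a \in I -> cc I (tog a K) = - cc I K.
Proof.
move=> aI; rewrite /cc /tog; case aK: (a \in K).
  have -> : (K :\ a \subset I) = (K \subset I).
    apply/idP/idP => H.
      by rewrite -(setD1K aK) subUset sub1set aI H.
    by apply/subsetP => i; rewrite in_setD1 => /andP[_ /(subsetP H)].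
  case: ifP => // KI; last by rewrite oppr0.
  have -> : I :\: (K :\ a) = a |: (I :\: K).
    by apply/setP => i; rewrite !inE; case: (eqVneq i a) => [->|] //=; rewrite ?aK ?aI.
  by rewrite cardsU1 !inE aK /= add1n exprS mulN1r.
have -> : (a |: K \subset I) = (K \subset I) by rewrite subUset sub1set aI.
case: ifP => // KI; last by rewrite oppr0.
have E : I :\: K = a |: (I :\: (a |: K)).
  by apply/setP => i; rewrite !inE; case: (eqVneq i a) => [->|] //=; rewrite ?aK ?aI.
by rewrite E cardsU1 !inE eqxx /= add1n exprS mulN1r opprK.
Qed.

Lemma comb (L I : {set 'I_n}) :
  \sum_(K : {set 'I_n} | L \subset K) cc I K = (L == I)%:R.
Proof.
case: (eqVneq L I) => [->|LI].
  rewrite (bigD1 I) //= big1 ?addr0.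
    by rewrite /cc subxx setDv cards0 expr0.
  move=> K /andP[IK KI]; rewrite /cc; case: ifP => // KI'.
  by case/eqP: KI; apply/eqP; rewrite eqEsubset KI' IK.
have [LsI|LnI] := boolP (L \subset I); last first.
  apply: big1 => K LK; rewrite /cc; case: ifP => // KI.
  by case/negP: LnI; apply: subset_trans KI.
have : L \proper I by rewrite properEneq LI.
case/properP => _ [a aI aL].
have : \sum_(K : {set 'I_n} | L \subset K) cc I K = - \sum_(K : {set 'I_n} | L \subset K) cc I K.
  rewrite -sumrN [LHS](reindex_inj (inv_inj (togK a))) /=.
  apply: eq_big => K.
    have iaF i : i \in L -> (i == a) = false.
      by move=> iL; apply/negP => /eqP ia; rewrite -ia iL in aL.
    by apply/idP/idP => H; apply/subsetP => i iL; have := subsetP H i iL;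
      move: (iaF i iL) => ia; rewrite /tog; case: (a \in K); rewrite !inE ia.
  by rewrite cc_tog.
set S := \sum_(K | _) _; move=> H; rewrite mulr0n; lra.
Qed.

Definition setK (x : bpoint n) : {set 'I_n} := [set i | x i].

Lemma pt_setK x : pt_of (setK x) = x.
Proof. by apply/ffunP => i; rewrite ffunE inE. Qed.

Lemma setK_pt K : setK (pt_of K) = K.
Proof. by apply/setP => i; rewrite inE ffunE. Qed.

Lemma XI_pt L K : @XI R n L (pt_of K) = (L \subset K)%:R.
Proof.
rewrite /XI; case: (boolP (L \subset K)) => LK.
  by rewrite big1 // => i iL; rewrite ffunE (subsetP LK).
case/subsetPn: LK => i iL iK.
by rewrite (bigD1 i) //= ffunE (negbTE iK) mul0r.
Qed.

Lemma sum_bp (F : bpoint n -> R) :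
  \sum_(x : bpoint n) F x = \sum_(K : {set 'I_n}) F (pt_of K).
Proof.
rewrite (reindex (@pt_of n)) //; exists setK => x _.
  by rewrite setK_pt. by rewrite pt_setK.
Qed.

Lemma sumcX (I L : {set 'I_n}) :
  \sum_(x : bpoint n) cc I (setK x) * @XI R n L x = (L == I)%:R.
Proof.
rewrite sum_bp -comb [RHS]big_mkcond /=; apply: eq_bigr => K _.
by rewrite setK_pt XI_pt; case: (L \subset K); rewrite ?mulr1 ?mulr0.
Qed.

Lemma etac_q (p : bpoint n -> R) (I L : {set 'I_n}) t :
  etac (fun x => p x + t * cc I (setK x)) L =
  etac p L + (if L == I then t else 0).
Proof.
rewrite /etac; under eq_bigr do rewrite mulrDl; rewrite big_split /=; congr (_ + _).
under eq_bigr do rewrite -mulrA; rewrite -mulr_sumr sumcX.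
by case: (L == I); rewrite ?mulr1 ?mulr0.
Qed.

Lemma cc_abs (I K : {set 'I_n}) : `|cc I K| <= 1.
Proof. by rewrite /cc; case: ifP => _; rewrite ?normr0 // normrX normrN1 expr1n. Qed.
End S.
Arguments cc {R n}. Arguments setK {n}. Arguments etac_q {R n}. Arguments cc_abs {R n}.
Lemma affine_derive {R : realType} (a c : R) :
  is_derive (0:R) (1:R) (fun t : R => a + t * c) c.
Proof.
have -> : (fun t : R => a + t * c) = cst a + c \*: id.
  by apply/funext => t /=; rewrite mulrC.
have H := is_deriveD (is_derive_cst a (0:R) (1:R)) (is_deriveZ c (is_derive_id (0:R) (1:R))).
apply: is_derive_eq H _.
by rewrite add0r /GRing.scale /= mulr1.
Qed.

Lemma ln_affine_derive (R : realType) (a c : R) : 0 < a ->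
  'D_1 (fun t : R => ln (a + t * c)) 0 = c / a.
Proof.
move=> a0.
have hf := affine_derive (R:=R) a c.
rewrite -derive1E.
change (((@ln R) \o (fun t : R => a + t * c))^`()%classic 0 = c / a).
rewrite derive1_comp.
- rewrite /= mul0r addr0 !derive1E (@derive_val _ _ _ _ _ _ _ (is_derive1_ln a0)) (@derive_val _ _ _ _ _ _ _ hf).
  by rewrite mulrC.
- exact: (@ex_derive _ _ _ _ _ _ _ hf).
- rewrite /= mul0r addr0; exact: (@ex_derive _ _ _ _ _ _ _ (is_derive1_ln a0)).
Qed.

Lemma score_eq {R : realType} {n : nat}
  (p : bpoint n -> R) (hp : is_pos_distr p)
  (pe : ({set 'I_n} -> R) -> bpoint n -> R)
  (hpe : forall q : bpoint n -> R, is_pos_distr q ->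
           forall x, pe (etac q) x = q x)
  (I : {set 'I_n}) (hI : I != finset.set0) x :
  score pe p I x = @cc R n I (setK x) / p x.
Proof.
have [ppos psum] := hp.
rewrite /score derive1E.
have hpos : \forall t \near (nbhs (0:R)), forall y, 0 < p y + t * @cc R n I (setK y).
  apply: filter_forall => y.
  apply: filterS (nbhs0_lt (ppos y)) => t ht.
  have h1 : `|t * @cc R n I (setK y)| < p y.
    rewrite normrM; apply: le_lt_trans ht.
    by rewrite -[leRHS]mulr1 ler_wpM2l ?cc_abs.
  move: h1; rewrite ltr_norml => /andP[h1 _]; lra.
rewrite (@near_eq_derive _ _ _ _ (fun t : R => ln (p x + t * @cc R n I (setK x)))).
  by rewrite ln_affine_derive.
near=> t.
have E : (fun L => etac p L + (if L == I then t else 0)) =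
         etac (fun y => p y + t * @cc R n I (setK y)).
  by apply/funext => L; rewrite etac_q.
rewrite E hpe //; split; first by near: t.
have := etac_q p I finset.set0 t.
rewrite eq_sym (negbTE hI) addr0 /etac.
under eq_bigr do rewrite /XI big_set0 mulr1.
under [X in _ = X -> _]eq_bigr do rewrite /XI big_set0 mulr1.
by move=> ->.
Unshelve. all: by end_near.
Qed.

Theorem proposition2 (R : realType) (n : nat) (hn : (1 <= n)%N)
  (p : bpoint n -> R) (hp : is_pos_distr p)
  (pe : ({set 'I_n} -> R) -> bpoint n -> R)
  (hpe : forall q : bpoint n -> R, is_pos_distr q ->
           forall x, pe (etac q) x = q x)
  (I J : {set 'I_n}) (hI : I != finset.set0) (hJ : J != finset.set0) :
  fisher pe p I J =
  \sum_(K : {set 'I_n} | K \subset I :&: J)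
     (-1) ^+ (#|I :\: K| + #|J :\: K|) / p (pt_of K).
Proof.
rewrite /fisher.
under eq_bigr => x _ do rewrite (score_eq _ hp _ hpe _ hI) (score_eq _ hp _ hpe _ hJ).
rewrite sum_bp [RHS]big_mkcond /=; apply: eq_bigr => K _.
have px := (proj1 hp) (pt_of K).
rewrite setK_pt subsetI /cc.
case: (K \subset I); case: (K \subset J) => /=;
  rewrite ?mul0r ?mulr0 //; rewrite exprD; field; by rewrite gt_eqF.
Qed.
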